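(* If $f_N\in H_N^{\mathrm{sip}}$ converges weakly to $f\in H^{\mathrm{sbm}}$ with respect to the Hilbert space convergence $H_N^{\mathrm{sip}}\to H^{\mathrm{sbm}}$, then $f_N$ (viewed as an element of $H_N^{\mathrm{rw}}$) also converges weakly to $f$ (viewed as an element of $H^{\mathrm{bm}}$, i.e. its Lebesgue a.e. class) with respect to the Hilbert space convergence $H_N^{\mathrm{rw}}\to H^{\mathrm{bm}}$.
   Context: $\gamma>0$; $\mu_N$ gives mass $\frac1N$ to each point of $\frac1N\mathbb Z$; $\nu_{\gamma,N}=\mu_N+\sqrt2\gamma\delta_0$. $H_N^{\mathrm{rw}}=L^2(\frac1N\mathbb Z,\mu_N)$, $H^{\mathrm{bm}}=L^2(\mathbb R,dx)$, Hilbert convergence witnessed by $C^{\mathrm{rw}}=C_c^\infty(\mathbb R)$ and $\Phi_Nf=f|_{\frac1N\mathbb Z}$. $H_N^{\mathrm{sip}}=L^2(\frac1N\mathbb Z,\nu_{\gamma,N})$, $H^{\mathrm{sbm}}=L^2(\mathbb R,dx+\sqrt2\gamma\delta_0)$, Hilbert convergence witnessed by $C^{\mathrm{sip}}=\{f+\lambda\mathbf 1_{\{0\}}:f\in C_c^\infty(\mathbb R),\lambda\in\mathbb R\}$ and $\Phi_Nf=f|_{\frac1N\mathbb Z}$. In either setting: $g_N\in H_N$ converges strongly to $g\in H$ if there exist $\tilde g_M$ in the respective $C$ with $\|\tilde g_M-g\|_H\to0$ and $\lim_M\limsup_N\|\Phi_N\tilde g_M-g_N\|_{H_N}=0$; $f_N$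 converges weakly to $f$ if $\langle f_N,g_N\rangle_{H_N}\to\langle f,g\rangle_H$ for every sequence $g_N$ converging strongly to $g$. *)

(* Defs.v *)
From HB Require Import structures.
From mathcomp Require Import all_boot all_order all_algebra.
From mathcomp Require Import all_classical all_reals all_analysis.
Set Implicit Arguments. Unset Strict Implicit. Unset Printing Implicit Defensive.
Import Order.TTheory GRing.Theory Num.Theory.
Import numFieldNormedType.Exports.
Local Open Scope classical_set_scope.
Local Open Scope ring_scope.

(* Convention: the scaling index N >= 1 of the paper is encoded as n : nat with
   N = n.+1.  A function on (1/N)Z is encoded as u : int -> R, u k = value at k/N. *)
Section Defs.
Variable R : realType.

Definition latN (n : nat) : R := (n.+1)%:R.
Definition latpt (n : nat) (k : int) : R := k%:~R / latN n.

Definition zsum (a : int -> R) : R :=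
  limn (series (fun k => a (Posz k) + a (Negz k))).
Definition zsummable (a : int -> R) : Prop :=
  cvgn (series (fun k => `|a (Posz k)| + `|a (Negz k)|)).

Definition in_Hrw (n : nat) (u : int -> R) : Prop :=
  zsummable (fun k => (latN n)^-1 * u k ^+ 2).
Definition dot_rw (n : nat) (u v : int -> R) : R :=
  zsum (fun k => (latN n)^-1 * (u k * v k)).
Definition norm_rw (n : nat) (u : int -> R) : R := Num.sqrt (dot_rw n u u).

(* H_N^sip = L^2((1/N)Z, nu_{gamma,N}), nu = mu_N + sqrt2 gamma delta_0 *)
Definition in_Hsip (gamma : R) (n : nat) (u : int -> R) : Prop :=
  zsummable (fun k => (latN n)^-1 * u k ^+ 2) /\
  (* the atom contributes the finite quantity sqrt2 gamma u(0)^2 *) True.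
Definition dot_sip (gamma : R) (n : nat) (u v : int -> R) : R :=
  dot_rw n u v + Num.sqrt 2 * gamma * (u 0 * v 0).
Definition norm_sip (gamma : R) (n : nat) (u : int -> R) : R :=
  Num.sqrt (dot_sip gamma n u u).

Definition in_Hbm (f : R -> R) : Prop :=
  measurable_fun setT f /\
  (lebesgue_measure).-integrable setT (fun x => (f x ^+ 2)%:E).
Definition dot_bm (f g : R -> R) : R :=
  Rintegral lebesgue_measure setT (fun x => f x * g x).
Definition norm_bm (f : R -> R) : R := Num.sqrt (dot_bm f f).

(* H^sbm = L^2(R, dx + sqrt2 gamma delta_0) *)
Definition in_Hsbm (gamma : R) (f : R -> R) : Prop :=
  in_Hbm f /\ (* the atom contributes the finite quantity sqrt2 gamma f(0)^2 *) True.
Definition dot_sbm (gamma : R) (f g : R -> R) : R :=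
  dot_bm f g + Num.sqrt 2 * gamma * (f 0 * g 0).
Definition norm_sbm (gamma : R) (f : R -> R) : R :=
  Num.sqrt (dot_sbm gamma f f).

Definition Phi (n : nat) (f : R -> R) : int -> R := fun k => f (latpt n k).

Definition smooth (f : R -> R) : Prop :=
  forall (m : nat) (x : R), derivable (derive1n m f) x 1.
Definition compact_support (f : R -> R) : Prop :=
  exists M : R, forall x : R, M < `|x| -> f x = 0.
Definition Ccinf (f : R -> R) : Prop := smooth f /\ compact_support f.

Definition C_rw (f : R -> R) : Prop := Ccinf f.
Definition C_sip (f : R -> R) : Prop :=
  exists (phi : R -> R) (lam : R), Ccinf phi /\
    f = (fun x => phi x + (if x == 0 then lam else 0)).

Definition strong_rw (gN : nat -> int -> R) (g : R -> R) : Prop :=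
  (forall n, in_Hrw n (gN n)) /\ in_Hbm g /\
  exists gt : nat -> R -> R, (forall M, C_rw (gt M)) /\
    (norm_bm (gt M \- g) @[M --> \oo] --> (0 : R)) /\
    ((fun M => limn_esup (fun n => (norm_rw n (Phi n (gt M) \- gN n))%:E))
        @ \oo --> 0%E).

Definition strong_sip (gamma : R) (gN : nat -> int -> R) (g : R -> R) : Prop :=
  (forall n, in_Hsip gamma n (gN n)) /\ in_Hsbm gamma g /\
  exists gt : nat -> R -> R, (forall M, C_sip (gt M)) /\
    (norm_sbm gamma (gt M \- g) @[M --> \oo] --> (0 : R)) /\
    ((fun M => limn_esup (fun n => (norm_sip gamma n (Phi n (gt M) \- gN n))%:E))
        @ \oo --> 0%E).

Definition weak_rw (fN : nat -> int -> R) (f : R -> R) : Prop :=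
  (forall n, in_Hrw n (fN n)) /\ in_Hbm f /\
  forall (gN : nat -> int -> R) (g : R -> R), strong_rw gN g ->
    dot_rw n (fN n) (gN n) @[n --> \oo] --> dot_bm f g.

Definition weak_sip (gamma : R) (fN : nat -> int -> R) (f : R -> R) : Prop :=
  (forall n, in_Hsip gamma n (fN n)) /\ in_Hsbm gamma f /\
  forall (gN : nat -> int -> R) (g : R -> R), strong_sip gamma gN g ->
    dot_sip gamma n (fN n) (gN n) @[n --> \oo] --> dot_sbm gamma f g.

End Defs.

(* Main.v *)
Require Import Defs.
From HB Require Import structures.
From mathcomp Require Import all_boot all_order all_algebra.
From mathcomp Require Import all_classical all_reals all_analysis.
From mathcomp Require Import ring lra.
From mathcomp Require Import measurable_realfun.
Set Implicit Arguments. Unset Strict Implicit. Unset Printing Implicit Defensive.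
Import Order.TTheory GRing.Theory Num.Theory.
Import numFieldNormedType.Exports.
Local Open Scope classical_set_scope.
Local Open Scope ring_scope.

Section Helpers.
Variable R : realType.
Implicit Types (a b u v : int -> R).

Definition pz a : nat -> R := fun k => a (Posz k) + a (Negz k).
Definition pza a : nat -> R := fun k => `|a (Posz k)| + `|a (Negz k)|.

Lemma zsummable_le a b : zsummable a -> (forall k, `|b k| <= `|a k|) ->
  zsummable b.
Proof.
rewrite /zsummable => h hb; apply: (series_le_cvg _ _ _ h) => n.
- by rewrite addr_ge0.
- by rewrite addr_ge0.
- by rewrite lerD.
Qed.

Lemma zsummableD a b : zsummable a -> zsummable b ->
  zsummable (fun k => a k + b k).
Proof.
move=> ha hb.
have hab : zsummable (fun k => `|a k| + `|b k|).
  rewrite /zsummable.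
  have -> : (fun k : nat => Num.norm (`|a (Posz k)| + `|b (Posz k)|) +
      Num.norm (`|a (Negz k)| + `|b (Negz k)|)) = pza a + pza b.
    apply: funext => k; rewrite /pza /= [X in X + _]ger0_norm ?addr_ge0 //.
    by rewrite [X in _ + X]ger0_norm ?addr_ge0 // addrACA.
  exact: is_cvg_seriesD.
refine (zsummable_le hab _) => k.
by rewrite [X in _ <= X]ger0_norm ?addr_ge0 // ler_normD.
Qed.

Lemma zsummableZ (c : R) a : zsummable a -> zsummable (fun k => c * a k).
Proof.
move=> ha.
have hc : zsummable (fun k => `|c| * a k).
  rewrite /zsummable.
  have -> : (fun k : nat => Num.norm (`|c| * a (Posz k)) + Num.norm (`|c| * a (Negz k))) =
     `|c| *: pza a.
    apply: funext => k; rewrite /pza /= !normrM normr_id -mulrDr.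
    reflexivity.
  exact: is_cvg_seriesZ.
by refine (zsummable_le hc _) => k; rewrite !normrM normr_id.
Qed.

Lemma zsummable_cvg a : zsummable a -> cvgn (series (pz a)).
Proof.
move=> ha; apply: normed_cvg.
apply: (series_le_cvg _ _ _ ha) => n.
- exact: normr_ge0.
- by rewrite addr_ge0.
- exact: ler_normD.
Qed.

Lemma zsumD a b : zsummable a -> zsummable b ->
  zsum (fun k => a k + b k) = zsum a + zsum b.
Proof.
move=> ha hb; rewrite /zsum.
have -> : (fun k : nat => a (Posz k) + b (Posz k) + (a (Negz k) + b (Negz k)))
   = pz a + pz b.
  by apply: funext => k; rewrite /pz /= addrACA.
exact: lim_seriesD (zsummable_cvg ha) (zsummable_cvg hb).
Qed.

Lemma series_fin0 (u : nat -> R) : (forall k, (0 < k)%N -> u k = 0) ->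
  series u @ \oo --> u 0%N.
Proof.
move=> h.
have hs : forall n, series u n.+1 = u 0%N.
  elim => [|n IH]; first by rewrite /series /= big_nat1.
  rewrite /series /= in IH *; by rewrite big_nat_recr //= IH (h n.+1) // addr0.
apply: cvg_near_cst; exists 1%N => // [[|n]] //= _; exact: hs n.
Qed.

Lemma zsum_fin0 a : (forall k, k != 0 -> a k = 0) -> zsum a = a 0.
Proof.
move=> h; rewrite /zsum; apply: cvg_lim => //.
have -> : a 0 = a (Posz 0) + a (Negz 0) by rewrite (h (Negz 0)) ?addr0.
apply: (@series_fin0 (fun k : nat => a k + a (Negz k))) => -[|k] // _.
by rewrite (h (Posz k.+1)) // (h (Negz k.+1)) // addr0.
Qed.

Lemma zsum_mod a (c : R) : zsummable a ->
  zsum (fun k => a k + (if k == 0 then c else 0)) = zsum a + c.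
Proof.
move=> ha; rewrite zsumD //.
  by rewrite (@zsum_fin0 (fun k => if k == 0 then c else 0)) //= => k /negbTE ->.
rewrite /zsummable; apply/cvg_ex; exists `|c|.
have -> : `|c| = `|c| + `|(0:R)| by rewrite normr0 addr0.
apply: (@series_fin0 (fun k : nat => `|(if Posz k == 0 then c else 0)| +
  `|(if Negz k == 0 then c else 0)|)) => -[|k] //= _.
by rewrite normr0 addr0.
Qed.

Lemma zsum_ge a : zsummable a -> (forall k, 0 <= a k) -> a 0 <= zsum a.
Proof.
move=> ha a0; rewrite /zsum.
have hnd : {homo series (pz a) : n m / (n <= m)%N >-> n <= m}.
  by apply: nondecreasing_series => n _ _; rewrite /pz addr_ge0.
apply: le_trans (nondecreasing_cvgn_le hnd (zsummable_cvg ha) 1%N).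
by rewrite /series /= big_nat1 /pz lerDl.
Qed.


Lemma latN_gt0 n : 0 < latN R n.
Proof. by rewrite /latN ltr0Sn. Qed.

Lemma in_Hrw_prod n u v : in_Hrw n u -> in_Hrw n v ->
  zsummable (fun k => (latN R n)^-1 * (u k * v k)).
Proof.
move=> hu hv; refine (zsummable_le (zsummableD hu hv) _) => k.
have hc : 0 < (latN R n)^-1 by rewrite invr_gt0 latN_gt0.
rewrite -mulrDr !normrM ler_wpM2l //.
rewrite [X in _ <= X]ger0_norm ?addr_ge0 ?sqr_ge0 //.
rewrite -normrM ler_norml; apply/andP; split; nra.
Qed.

Lemma in_Hrw_sub n u v : in_Hrw n u -> in_Hrw n v ->
  in_Hrw n (fun k => u k - v k).
Proof.
move=> hu hv.
refine (zsummable_le (zsummableD (zsummableZ (c:=2) hu) (zsummableZ (c:=2) hv)) _) => k.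
have hc : 0 < (latN R n)^-1 by rewrite invr_gt0 latN_gt0.
have h1 : 0 <= (latN R n)^-1 * (u k - v k) ^+ 2 by rewrite mulr_ge0 ?sqr_ge0 ?(ltW hc).
have h2 : 0 <= (latN R n)^-1 * u k ^+ 2 by rewrite mulr_ge0 ?sqr_ge0 ?(ltW hc).
have h3 : 0 <= (latN R n)^-1 * v k ^+ 2 by rewrite mulr_ge0 ?sqr_ge0 ?(ltW hc).
have h4 : 0 <= 2 * ((latN R n)^-1 * u k ^+ 2) + 2 * ((latN R n)^-1 * v k ^+ 2).
  by rewrite addr_ge0 // mulr_ge0.
rewrite (ger0_norm h1) (ger0_norm h4) -subr_ge0.
rewrite (_ : _ - _ = (latN R n)^-1 * (u k + v k) ^+ 2); last by ring.
exact: mulr_ge0 (ltW hc) (sqr_ge0 (u k + v k)).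
Qed.

Definition killz (v : int -> R) : int -> R :=
  fun k => v k + (if k == 0 then - v 0 else 0).

Lemma dot_rw_kill n u v : in_Hrw n u -> in_Hrw n v ->
  dot_rw n u (killz v) = dot_rw n u v - (latN R n)^-1 * (u 0 * v 0).
Proof.
move=> hu hv; rewrite /dot_rw.
have -> : (fun k => (latN R n)^-1 * (u k * killz v k)) =
  (fun k => (latN R n)^-1 * (u k * v k) +
     (if k == 0 then - ((latN R n)^-1 * (u 0 * v 0)) else 0)).
  apply: funext => k; rewrite /killz.
  case: (eqVneq k 0) => [->|nk]; first by ring.
  by rewrite !addr0.
by rewrite zsum_mod //; exact: in_Hrw_prod.
Qed.

Lemma dot_rw_killkill n v : in_Hrw n v ->
  dot_rw n (killz v) (killz v) = dot_rw n v v - (latN R n)^-1 * (v 0 * v 0).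
Proof.
move=> hv; rewrite /dot_rw.
have -> : (fun k => (latN R n)^-1 * (killz v k * killz v k)) =
  (fun k => (latN R n)^-1 * (v k * v k) +
     (if k == 0 then - ((latN R n)^-1 * (v 0 * v 0)) else 0)).
  apply: funext => k; rewrite /killz.
  case: (eqVneq k 0) => [->|nk]; first by rewrite ?eqxx /=; ring.
  by rewrite !addr0.
by rewrite zsum_mod //; exact: in_Hrw_prod.
Qed.

Lemma dot_rw_ge n v : in_Hrw n v ->
  (latN R n)^-1 * (v 0 * v 0) <= dot_rw n v v.
Proof.
move=> hv; rewrite /dot_rw.
apply: (zsum_ge (a := fun k => (latN R n)^-1 * (v k * v k))).
  exact: in_Hrw_prod.
move=> k; apply: mulr_ge0; first by rewrite invr_ge0 ltW ?latN_gt0.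
by rewrite -expr2 sqr_ge0.
Qed.

Lemma latpt0 n : latpt R n 0 = 0.
Proof. by rewrite /latpt mul0r. Qed.

Lemma latpt_eq0 n k : (latpt R n k == 0) = (k == 0).
Proof.
rewrite /latpt mulf_eq0 invr_eq0 intr_eq0.
by rewrite (negbTE (lt0r_neq0 (latN_gt0 n))) orbF.
Qed.

Definition killr (f : R -> R) : R -> R :=
  fun x => f x + (if x == 0 then - f 0 else 0).

Lemma Phi_kill n (f : R -> R) : Phi n (killr f) = killz (Phi n f).
Proof.
by apply: funext => k; rewrite /Phi /killr /killz latpt_eq0 latpt0.
Qed.

Lemma zsummable_fin a K :
  (forall k : nat, (K <= k)%N -> a (Posz k) = 0 /\ a (Negz k) = 0) ->
  zsummable a.
Proof.
move=> h; rewrite /zsummable; apply: (@is_cvg_near_cst _ _ (series (pza a) K)).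
exists K => // m /= hm.
rewrite /series /= (@big_cat_nat _ _ _ K 0 m _ _ (leq0n K) hm) /=.
rewrite [X in _ + X]big_nat_cond [X in _ + X]big1 ?addr0 // => i /andP[/andP[Ki _] _].
by have [-> ->] := h i Ki; rewrite normr0 addr0.
Qed.

Lemma in_Hrw_Phi n (f : R -> R) : compact_support f -> in_Hrw n (Phi n f).
Proof.
case=> M hM.
set M' := `|M|.
have hM'0 : 0 <= M' * latN R n by apply: mulr_ge0; [exact: normr_ge0 | exact: ltW (latN_gt0 n)].
have hK := archi_boundP hM'0.
set K := Num.Def.archi_bound _ in hK.
apply: (zsummable_fin (K := K)) => k hk.
have hkK : M' * latN R n < k%:R.
  by apply: (lt_le_trans hK); rewrite ler_nat.
have hMM : M <= M' by exact: ler_norm.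
have hN := latN_gt0 n.
have nat_intr : forall m : nat, (Posz m)%:~R = m%:R :> R by [].
split; rewrite /Phi hM; try by rewrite expr2 !mulr0.
- rewrite /latpt nat_intr ger0_norm; last by rewrite divr_ge0 ?ler0n ?ltW.
  by apply: (le_lt_trans hMM); rewrite ltr_pdivlMr.
- rewrite /latpt NegzE intrN nat_intr mulNr normrN ger0_norm; last by rewrite divr_ge0 ?ler0n ?ltW.
  apply: (le_lt_trans hMM); rewrite ltr_pdivlMr //.
  by apply: (lt_trans hkK); rewrite ltr_nat.
Qed.

Lemma Rint_mod (f g : R -> R) : measurable_fun setT f ->
  (forall x, x != 0 -> f x = g x) ->
  Rintegral lebesgue_measure setT f = Rintegral lebesgue_measure setT g.
Proof.
move=> mf h; rewrite /Rintegral.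
have mD : measurable (setT `\ (0:R)) := measurableD measurableT (measurable_set1 0).
have hin : {in setT `\ (0:R), f =1 g}.
  by move=> x /set_mem [_ hx]; apply: h; apply/eqP.
have mf' : measurable_fun (setT `\ (0:R)) f by exact: measurable_funS mf.
have mg' : measurable_fun (setT `\ (0:R)) g by exact: eq_measurable_fun mf'.
rewrite -(@integral_setD1 _ (fun x => (f x)%:E) 0 setT mD); last exact/measurable_realfun.measurable_EFinP.
rewrite -(@integral_setD1 _ (fun x => (g x)%:E) 0 setT mD); last exact/measurable_realfun.measurable_EFinP.
congr fine; apply: eq_integral => x hx; by rewrite (hin x hx).
Qed.


Definition modr (f : R -> R) (c : R) : R -> R :=
  fun x => f x + (if x == 0 then c else 0).

Lemma modr_meas f c : measurable_fun setT f -> measurable_fun setT (modr f c).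
Proof.
move=> mf.
have -> : modr f c = f \+ (fun x => c * \1_[set (0:R)] x).
  apply: funext => x; rewrite /modr /= indicE.
  case: (eqVneq x 0) => [->|nx].
    by rewrite mem_set // mulr1.
  by rewrite memNset ?mulr0 //=; exact/eqP.
apply: measurable_realfun.measurable_funD => //.
apply: measurable_realfun.measurable_funM; first exact: measurable_cst.
exact: measurable_realfun.measurable_indic (measurable_set1 0).
Qed.

Lemma in_Hbm_mod f c : in_Hbm f -> in_Hbm (modr f c).
Proof.
case=> mf intf; split; first exact: modr_meas.
have mfX : forall g : R -> R, measurable_fun setT g ->
    measurable_fun setT (fun x => (g x ^+ 2)%:E).
  move=> g mg; apply/measurable_realfun.measurable_EFinP.
  exact: measurable_realfun.measurable_funX.
have mT := @measurableT _ R.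
apply: (proj2 (negligible_integrable (mu := lebesgue_measure) (measurable_set1 0) mT (mfX _ (modr_meas c mf))
   (lebesgue_measure_set1 0))).
have mD : measurable (setT `\` [set (0:R)]) := measurableD mT (measurable_set1 0).
apply: (eq_integrable (mu := lebesgue_measure) mD (fun x => (f x ^+ 2)%:E)).
  move=> x /set_mem [_ hx]; rewrite /modr.
  by rewrite ifF ?addr0 //; apply/negbTE/eqP.
exact: (proj1 (negligible_integrable (mu := lebesgue_measure) (measurable_set1 0) mT (mfX _ mf)
   (lebesgue_measure_set1 0)) intf).
Qed.

Lemma Ccinf_meas (f : R -> R) : Ccinf f -> measurable_fun setT f.
Proof.
case=> hs _; apply: (@continuous_measurable_fun R) => x.
have := hs 0%N x; rewrite derive1n0 => /derivable1_diffP.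
exact: differentiable_continuous.
Qed.

Lemma Ccinf0 : Ccinf (fun _ : R => 0 : R).
Proof.
split; last by exists 0.
move=> m x.
have -> : derive1n m (fun _ : R => 0 : R) = (fun _ => 0).
  elim: m => // m IH; rewrite derive1nS IH; apply: funext => y.
  exact: derive1_cst.
exact: derivable_cst.
Qed.

Local Open Scope ereal_scope.

Lemma le_limn_esup (u v : (\bar R)^nat) : (forall n, u n <= v n) ->
  limn_esup u <= limn_esup v.
Proof.
move=> huv; rewrite !limn_esup_lim; apply: lee_lim.
- exact: is_cvg_esups.
- exact: is_cvg_esups.
apply: nearW => n; rewrite /esups /=.
apply: ge_ereal_sup => _ [k /= nk <-].
apply: le_trans (huv k) _; apply: ereal_sup_ubound; by exists k.
Qed.

Lemma limn_esup_ge0 (u : (\bar R)^nat) : (forall n, 0 <= u n) ->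
  0 <= limn_esup u.
Proof.
move=> u0; rewrite limn_esup_lim; apply: lime_ge; first exact: is_cvg_esups.
apply: nearW => n; rewrite /esups /=.
apply: le_trans (u0 n) _; apply: ereal_sup_ubound; exists n; [exact: leqnn | by []].
Qed.

Lemma limn_esup_lt (u : (\bar R)^nat) x : limn_esup u < x ->
  exists n0, forall n, (n0 <= n)%N -> u n < x.
Proof.
rewrite limn_esup_lim (cvg_lim _ (@cvg_esups_inf _ u)) //.
move=> /ereal_inf_lt [_ [n0 _ <-] hlt].
exists n0 => n hn; apply: le_lt_trans hlt.
apply: ereal_sup_ubound; by exists n.
Qed.


Local Close Scope ereal_scope.

Lemma Rint0 : Rintegral lebesgue_measure setT (fun _ : R => 0 : R) = 0.
Proof. by rewrite Rintegral_cst // mul0r. Qed.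

Lemma norm_sbm_zero gamma : norm_sbm gamma (fun _ : R => 0 : R) = 0.
Proof.
rewrite /norm_sbm /dot_sbm /dot_bm !mulr0 addr0.
by rewrite Rint0 sqrtr0.
Qed.

Lemma norm_sip_zero gamma n : norm_sip gamma n (fun _ : int => 0 : R) = 0.
Proof.
rewrite /norm_sip /dot_sip /dot_rw !mulr0.
by rewrite (@zsum_fin0 (fun _ => 0)) // addr0 sqrtr0.
Qed.

End Helpers.

Theorem proposition5p12 (R : realType) (gamma : R) (hgamma : 0 < gamma)
  (fN : nat -> int -> R) (f : R -> R) :
  weak_sip gamma fN f -> weak_rw fN f.
Proof.
case=> hfN [hf Hw].
have hfrw : forall n, in_Hrw n (fN n) by move=> n; exact: (hfN n).1.
split => //; split; first exact: hf.1.
move=> gN g [hgN [hg [gt [Cg [Hng Hlim]]]]].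
set s2g := Num.sqrt 2 * gamma.
have s2g_gt0 : 0 < s2g by rewrite mulr_gt0 // sqrtr_gt0.
have harm : (latN R n)^-1 @[n --> \oo] --> (0:R).
  have -> : (fun n => (latN R n)^-1) = harmonic by apply: funext.
  exact: cvg_harmonic.
pose e0 : nat -> int -> R := fun n k => if k == 0 then 1 else 0.
pose h0 : R -> R := modr (fun _ => 0) 1.
have Hs0 : strong_sip gamma e0 h0.
  split.
    move=> n; split => //; apply: (zsummable_fin (K:=1)) => -[|k] // _.
    by rewrite /e0 /= expr2 !mulr0.
  split.
    split => //; apply: in_Hbm_mod; split; first exact: measurable_cst.
    apply: (eq_integrable (mu := lebesgue_measure) measurableT (cst 0)).
      by move=> x _; rewrite /= expr2 mulr0.
    exact: integrable0.
  exists (fun _ => h0); split.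
    by move=> M; exists (fun _ => 0), 1; split; [exact: Ccinf0|].
  split.
    have -> : h0 \- h0 = (fun _ => 0) by apply: funext => x; rewrite /= subrr.
    rewrite norm_sbm_zero; exact: cvg_cst.
  have -> : (fun n => (norm_sip gamma n (Phi n h0 \- e0 n))%:E) = (fun _ => 0%E).
    apply: funext => n.
    have -> : Phi n h0 \- e0 n = (fun _ => 0).
      apply: funext => k; rewrite /Phi /h0 /modr /e0 /= latpt_eq0.
      by case: (k == 0); rewrite add0r subrr.
    by rewrite norm_sip_zero.
  rewrite (cvg_limn_einf_sup (cvg_cst (0%E : \bar R))).2.
  exact: cvg_cst.
have H1 := Hw _ _ Hs0.
have E1 : forall n, dot_sip gamma n (fN n) (e0 n) = ((latN R n)^-1 + s2g) * fN n 0.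
  move=> n; rewrite /dot_sip /dot_rw.
  rewrite (@zsum_fin0 _ (fun k => (latN R n)^-1 * (fN n k * e0 n k))); last first.
    by move=> k /negbTE nk; rewrite /e0 nk !mulr0.
  by rewrite /e0 /= /s2g; ring.
have E2 : dot_sbm gamma f h0 = s2g * f 0.
  rewrite /dot_sbm /dot_bm -(@Rint_mod _ (fun _ => 0)); last 2 first.
  - exact: measurable_cst.
  - by move=> x /negbTE hx; rewrite /h0 /modr hx addr0 mulr0.
  by rewrite Rint0 add0r /h0 /modr eqxx add0r mulr1.
have Hf0 : fN n 0 @[n --> \oo] --> f 0.
  have hc : ((latN R n)^-1 + s2g) @[n --> \oo] --> s2g.
    have := cvgD harm (cvg_cst s2g); rewrite [0 + s2g]add0r; exact.
  have H1' : ((latN R n)^-1 + s2g) * fN n 0 @[n --> \oo] --> s2g * f 0.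
    have <- : (fun n => dot_sip gamma n (fN n) (e0 n)) =
       (fun n => ((latN R n)^-1 + s2g) * fN n 0) by apply: funext => n; exact: E1.
    by rewrite -E2.
  have hne : forall n, (latN R n)^-1 + s2g != 0.
    by move=> n; rewrite gt_eqF // addr_gt0 // invr_gt0 latN_gt0.
  have -> : (fun n => fN n 0) = (fun n => (((latN R n)^-1 + s2g) * fN n 0) *
      ((latN R n)^-1 + s2g)^-1).
    by apply: funext => n; rewrite mulrAC divff ?mul1r.
  have -> : f 0 = (s2g * f 0) * s2g^-1 by rewrite mulrAC divff ?mul1r // gt_eqF.
  apply: cvgM; first exact: H1'.
  by apply: cvgV; [exact: lt0r_neq0 s2g_gt0 | exact: hc].
have Hg0 : (latN R n)^-1 * gN n 0 @[n --> \oo] --> (0:R).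
  move/fine_cvgP: Hlim => [hfin hcv].
  have hlt := cvgr_lt _ hcv _ ltr01.
  have [M1 _ HM1] := hfin.
  have [M2 _ HM2] := hlt.
  set M := maxn M1 M2.
  have fM := HM1 M (leq_maxl _ _).
  have ltM := HM2 M (leq_maxr _ _).
  have ltM' : (limn_esup (fun n => (norm_rw n (Phi n (gt M) \- gN n))%:E) < 1%:E)%E.
    by move: fM ltM => /= fM ltM; rewrite -(fineK fM) lte_fin.
  have [n0 Hn0] := limn_esup_lt ltM'.
  have hv : forall n, in_Hrw n (Phi n (gt M) \- gN n).
    move=> n; apply: in_Hrw_sub (hgN n); exact: in_Hrw_Phi (Cg M).2.
  have hsq : forall n, (n0 <= n)%N ->
      (latN R n)^-1 * ((Phi n (gt M) \- gN n) 0 * (Phi n (gt M) \- gN n) 0) < 1.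
    move=> n hn; have := Hn0 n hn; rewrite lte_fin /norm_rw.
    have hge := dot_rw_ge (hv n).
    rewrite -[X in Num.sqrt _ < X](sqrtr1 R) ltr_sqrt ?ltr01 // => hlt1.
    exact: le_lt_trans hge hlt1.
  have hv0 : (latN R n)^-1 * ((Phi n (gt M) \- gN n) 0) @[n --> \oo] --> (0:R).
    apply/cvgr0Pnorm_lt => e epos.
    have e20 : 0 < e ^+ 2 by rewrite exprn_gt0.
    have := (cvgr0Pnorm_lt _).1 harm _ e20.
    move=> [K1 _ HK1]; exists (maxn K1 n0) => // n /= hn.
    have := HK1 n (leq_trans (leq_maxl _ _) hn); rewrite /= ger0_norm ?invr_ge0 ?ltW ?latN_gt0 // => hN.
    have := hsq n (leq_trans (leq_maxr _ _) hn).
    set c := (latN R n)^-1; set x := (Phi n (gt M) \- gN n) 0.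
    have c0 : 0 < c by rewrite invr_gt0 latN_gt0.
    move=> hx.
    have hx2 : `|c * x| ^+ 2 < e ^+ 2.
      rewrite real_normK ?num_real //.
      have -> : (c * x) ^+ 2 = c * (c * (x * x)) by ring.
      apply: (le_lt_trans _ hN).
      rewrite -[X in _ <= X]mulr1 ler_wpM2l ?ltW //.
    have na := normr_ge0 (c * x).
    nra.
  have -> : (fun n => (latN R n)^-1 * gN n 0) = (fun n =>
     (latN R n)^-1 * gt M 0 - (latN R n)^-1 * ((Phi n (gt M) \- gN n) 0)).
    by apply: funext => n; rewrite /Phi /= latpt0; ring.
  rewrite -[X in _ --> X](subr0 (0:R)).
  apply: cvgB => //.
  have := cvgM harm (cvg_cst (gt M 0)); rewrite [0 * gt M 0]mul0r; exact.
set hN := fun n => killz (gN n).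
set h := killr g.
set gt' := fun M => killr (gt M).
have hmeas_g := hg.1.
have Hs : strong_sip gamma hN h.
  split.
    move=> n; split => //; refine (zsummable_le (hgN n) _) => k.
    rewrite /hN /killz; case: (eqVneq k 0) => [->|nk].
      by rewrite subrr expr2 !mulr0 normr0.
    by rewrite addr0.
  split.
    by split => //; exact: in_Hbm_mod.
  exists gt'; split.
    by move=> M; exists (gt M), (- gt M 0); split => //; exact: Cg.
  split.
    have -> : (fun M => norm_sbm gamma (gt' M \- h)) = (fun M => norm_bm (gt M \- g)).
      apply: funext => M; rewrite /norm_sbm /norm_bm /dot_sbm.
      have -> : (gt' M \- h) 0 = 0 by rewrite /= /gt' /h /killr eqxx; ring.
      rewrite (_ : Num.sqrt 2 * gamma * (0 * 0) = 0) ?addr0; last by rewrite !mulr0.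
      congr Num.sqrt; rewrite /dot_bm; symmetry; apply: Rint_mod.
        apply: measurable_funM; apply: measurable_funB => //; exact: Ccinf_meas (Cg M).
      by move=> x /negbTE hx; rewrite /= /gt' /h /killr hx !addr0.
    exact: Hng.
  apply: (@squeeze_cvge _ _ _ _ (fun _ => 0%E) _ _ _ _ (cvg_cst _) Hlim).
  apply: nearW => M; apply/andP; split.
    by apply: limn_esup_ge0 => n; rewrite lee_fin sqrtr_ge0.
  apply: le_limn_esup => n; rewrite lee_fin.
  have -> : Phi n (gt' M) \- hN n = killz (Phi n (gt M) \- gN n).
    apply: funext => k; rewrite /gt' Phi_kill /hN /killz /=.
    by case: (k == 0); rewrite ?addr0 //; ring.
  rewrite /norm_sip /norm_rw /dot_sip dot_rw_killkill; last first.
    by apply: in_Hrw_sub (hgN n); exact: in_Hrw_Phi (Cg M).2.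
  rewrite /killz eqxx subrr !mulr0 addr0.
  apply: ler_wsqrtr; rewrite gerBl; apply: mulr_ge0.
    by rewrite invr_ge0 ltW ?latN_gt0.
  by rewrite -expr2 sqr_ge0.
have H2 := Hw _ _ Hs.
have E3 : dot_sbm gamma f h = dot_bm f g.
  rewrite /dot_sbm /h /killr eqxx subrr !mulr0 addr0 /dot_bm.
  symmetry; apply: Rint_mod; first exact: measurable_funM hf.1.1 hg.1.
  by move=> x /negbTE hx; rewrite hx addr0.
have E4 : forall n, dot_rw n (fN n) (gN n) =
    dot_sip gamma n (fN n) (hN n) + fN n 0 * ((latN R n)^-1 * gN n 0).
  move=> n; rewrite /dot_sip /hN dot_rw_kill //.
  rewrite /killz eqxx subrr !mulr0 addr0; ring.
have -> : (fun n => dot_rw n (fN n) (gN n)) = (fun n =>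
    dot_sip gamma n (fN n) (hN n) + fN n 0 * ((latN R n)^-1 * gN n 0)).
  by apply: funext => n; exact: E4.
rewrite -[X in _ --> X]addr0 -E3.
apply: cvgD; first exact: H2.
rewrite -(mulr0 (f 0)); exact: cvgM Hf0 Hg0.
Qed.
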